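(* For $M\in\frac12\mathbb{Z}_{>0}$ and $s\in\frac12\mathbb{Z}$, $$2\tilde\Psi^{[M;s]}(2\tau,z_1,z_2,t)=\tilde\Psi^{[2M;2s]}\Big(\tau,\frac{z_1}2,\frac{z_2}2,\frac t2\Big)+e^{-2\pi is}\,\tilde\Psi^{[2M;2s]}\Big(\tau,\frac{z_1+1}2,\frac{z_2-1}2,\frac t2\Big).$$
   Context: Let $\operatorname{Im}\tau>0$, $q=e^{2\pi i\tau}$. For $m\in\frac12\mathbb{Z}_{>0}$, $s,j\in\frac12\mathbb{Z}$ define $\Phi^{+[m;s]}(\tau,z_1,z_2)=\sum_{n\in\mathbb{Z}}\frac{e^{2\pi imn(z_1+z_2)+2\pi isz_1}q^{mn^2+sn}}{1-e^{2\pi iz_1}q^n}$, $\Theta^+_{j,m}(\tau,z)=\sum_{n\in\mathbb{Z}}e^{2\pi imz(n+\frac j{2m})}q^{m(n+\frac j{2m})^2}$, $R^+_{j,m}(\tau,z)=\sum_{n\in\frac12\mathbb{Z},\,n\equiv j\bmod 2m}\{\operatorname{sign}(n-\frac12-j+2m)-E(\psi_{m,n}(\tau,z))\}e^{-\frac{\pi in^2}{2m}\tau+2\pi inz}$, with $E(x)=2\int_0^xe^{-\pi u^2}du$, $\psi_{m,n}(\tau,z)=(n-2m\frac{\operatorname{Im}z}{\operatorname{Im}\tau})\sqrt{\frac{\operatorname{Im}\tau}m}$; $\tilde\Phi^{+[m;s]}=\Phi^{+[m;s]}-\frac12\sum_{j\in s+\mathbb{Z},\,s\le j<s+2m}R^+_{j,m}(\tau,\frac{z_1-z_2}2)\Theta^+_{j,m}(\tau,z_1+z_2)$.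 Finally $\tilde\Psi^{[M;s]}(\tau,z_1,z_2,t)=e^{-2\pi iMt}\big(\tilde\Phi^{+[M;s]}(\tau,z_1,z_2)-\tilde\Phi^{+[M;s]}(\tau,-z_2,-z_1)\big)$. *)

(* Defs.v *)
From Stdlib Require Import Reals ZArith.
From Coquelicot Require Import Coquelicot.
Open Scope R_scope.

Definition cexp (z : C) : C :=
  (exp (Re z) * cos (Im z), exp (Re z) * sin (Im z)).

(* e(x) := exp(2 pi i x); q^a = e(a tau) *)
Definition ee (x : C) : C := cexp (Cmult (RtoC (2 * PI)) (Cmult Ci x)).

Definition csum_nat (f : nat -> C) : C :=
  (Series (fun k => Re (f k)), Series (fun k => Im (f k))).

Definition csum_Z (f : Z -> C) : C :=
  Cplus (csum_nat (fun k => f (Z.of_nat k)))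
        (csum_nat (fun k => f (- Z.of_nat k - 1)%Z)).

Fixpoint csum_fin (N : nat) (f : nat -> C) : C :=
  match N with
  | O => RtoC 0
  | S N' => Cplus (csum_fin N' f) (f N')
  end.

Definition sgn (x : R) : R :=
  if Rlt_dec 0 x then 1 else if Rlt_dec x 0 then -1 else 0.

Definition Eerf (x : R) : R := 2 * RInt (fun u => exp (- PI * u ^ 2)) 0 x.

Definition psi (m n : R) (tau z : C) : R :=
  (n - 2 * m * Im z / Im tau) * sqrt (Im tau / m).

Definition Phi_plus (m s : R) (tau z1 z2 : C) : C :=
  csum_Z (fun n =>
    let nr := RtoC (IZR n) in
    Cdiv (ee (Cplus (Cplus (Cmult (Cmult (RtoC m) nr) (Cplus z1 z2))
                           (Cmult (RtoC s) z1))
                    (Cmult (RtoC (m * IZR n ^ 2 + s * IZR n)) tau)))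
         (Cminus (RtoC 1) (ee (Cplus z1 (Cmult nr tau))))).

Definition Theta_plus (j m : R) (tau z : C) : C :=
  csum_Z (fun n =>
    let a := IZR n + j / (2 * m) in
    ee (Cplus (Cmult (RtoC (m * a)) z) (Cmult (RtoC (m * a ^ 2)) tau))).

(* R^+_{j,m}(tau,z): n ranges over n in (1/2)Z with n = j mod 2m,
   i.e. n = j + 2 m k, k in Z *)
Definition R_plus (j m : R) (tau z : C) : C :=
  csum_Z (fun k =>
    let n := j + 2 * m * IZR k in
    Cmult (RtoC (sgn (n - 1/2 - j + 2 * m) - Eerf (psi m n tau z)))
          (ee (Cplus (Cmult (RtoC (- n ^ 2 / (4 * m))) tau)
                     (Cmult (RtoC n) z)))).

(* half-integers are encoded by their doubles: m = m2/2 (m2 > 0), s = s2/2 *)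
Definition half_nat (m2 : nat) : R := INR m2 / 2.
Definition half_Z (s2 : Z) : R := IZR s2 / 2.

(* tilde Phi^{+[m;s]}: the j-sum runs over j = s + i, i = 0, ..., 2m-1 *)
Definition Phi_tilde (m2 : nat) (s2 : Z) (tau z1 z2 : C) : C :=
  let m := half_nat m2 in
  let s := half_Z s2 in
  Cminus (Phi_plus m s tau z1 z2)
    (Cmult (RtoC (1/2))
       (csum_fin m2 (fun i =>
          let j := s + INR i in
          Cmult (R_plus j m tau (Cdiv (Cminus z1 z2) (RtoC 2)))
                (Theta_plus j m tau (Cplus z1 z2))))).

Definition Psi_tilde (M2 : nat) (s2 : Z) (tau z1 z2 t : C) : C :=
  Cmult (ee (Copp (Cmult (RtoC (half_nat M2)) t)))
    (Cminus (Phi_tilde M2 s2 tau z1 z2)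
            (Phi_tilde M2 s2 tau (Copp z2) (Copp z1))).

(* Main.v *)
From Stdlib Require Import Reals ZArith Lra Lia FunctionalExtensionality.
From Coquelicot Require Import Coquelicot.
Require Import Defs.
Open Scope R_scope.
Ltac ceq := apply injective_projections; unfold Cdiv, Cminus, Cinv, Cplus, Cmult, Copp, RtoC, Ci, Re, Im; simpl; try field.

Lemma ee_eq (x : C) : ee x = (exp (-(2*PI*Im x)) * cos (2*PI*Re x), exp (-(2*PI*Im x)) * sin (2*PI*Re x)).
Proof.
  destruct x as [a b]; unfold ee, cexp, Re, Im; simpl.
  replace (2 * PI * (0 * a - 1 * b) - 0 * (0 * b + 1 * a)) with (-(2*PI*b)) by ring.
  replace (2 * PI * (0 * b + 1 * a) + 0 * (0 * a - 1 * b)) with (2*PI*a) by ring.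
  reflexivity.
Qed.

Lemma ee_add (x y : C) : ee (Cplus x y) = Cmult (ee x) (ee y).
Proof.
  rewrite !ee_eq. destruct x as [a b], y as [c d]; simpl.
  replace (- (2 * PI * (b + d))) with ((- (2*PI*b)) + (-(2*PI*d))) by ring.
  replace (2 * PI * (a + c)) with (2*PI*a + 2*PI*c) by ring.
  rewrite exp_plus, cos_plus, sin_plus.
  apply injective_projections; unfold Cmult; simpl; ring.
Qed.

Lemma ee_0 : ee (RtoC 0) = RtoC 1.
Proof. rewrite ee_eq; unfold RtoC; simpl. rewrite !Rmult_0_r, Ropp_0, exp_0, cos_0, sin_0.
  apply injective_projections; simpl; ring. Qed.

Lemma sin_kPI (k : Z) : sin (IZR k * PI) = 0.
Proof. apply sin_eq_0_1. eauto. Qed.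

Lemma cos_2kPI (k : Z) : cos (2 * (IZR k * PI)) = 1.
Proof. rewrite cos_2a_sin, sin_kPI. ring. Qed.

Lemma ee_int (k : Z) : ee (RtoC (IZR k)) = RtoC 1.
Proof. rewrite ee_eq; unfold RtoC; simpl. rewrite Rmult_0_r, Ropp_0, exp_0.
  replace (2 * PI * IZR k) with (2 * (IZR k * PI)) by ring.
  rewrite cos_2kPI, sin_2a, sin_kPI. apply injective_projections; simpl; ring. Qed.

Lemma ee_halfint_im (k : Z) : Im (ee (RtoC (IZR k / 2))) = 0.
Proof. rewrite ee_eq; unfold RtoC; simpl.
  replace (2 * PI * (IZR k / 2)) with (IZR k * PI) by field. rewrite sin_kPI. ring. Qed.

Lemma ee_half : ee (RtoC (1/2)) = RtoC (-1).
Proof. rewrite ee_eq; unfold RtoC; simpl. rewrite Rmult_0_r, Ropp_0, exp_0.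
  replace (2 * PI * (1/2)) with PI by field. rewrite cos_PI, sin_PI.
  apply injective_projections; simpl; ring. Qed.

Lemma Cmod_ee (x : C) : Cmod (ee x) = exp (-(2*PI*Im x)).
Proof. rewrite ee_eq. unfold Cmod.
  pose proof (sin2_cos2 (2*PI*Re x)) as H; unfold Rsqr in *.
  set (E := exp _). set (c := cos _) in *. set (si := sin _) in *.
  match goal with |- sqrt ?a = _ => replace a with (E^2) end.
  - apply sqrt_pow2. apply Rlt_le, exp_pos.
  - simpl. transitivity (E*E*(si*si+c*c)); [rewrite H; ring|ring]. Qed.

Definition conv_nat (f : nat -> C) := ex_series (fun k => Re (f k)) /\ ex_series (fun k => Im (f k)).

Lemma exs_scal (c : R) (u : nat -> R) : ex_series u -> ex_series (fun k => c * u k).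
Proof. intro H. exact (ex_series_scal_l c u H). Qed.
Lemma exs_plus (u v : nat -> R) : ex_series u -> ex_series v -> ex_series (fun k => u k + v k).
Proof. intros H1 H2. exact (ex_series_plus u v H1 H2). Qed.

Lemma csum_nat_lin a b f g : conv_nat f -> conv_nat g ->
  csum_nat (fun k => Cplus (Cmult a (f k)) (Cmult b (g k))) = Cplus (Cmult a (csum_nat f)) (Cmult b (csum_nat g)).
Proof.
  intros [H1 H2] [H3 H4]. unfold csum_nat.
  apply injective_projections; simpl.
  - rewrite (Series_ext _ (fun k => (Re a * Re (f k) + (- Im a) * Im (f k)) + (Re b * Re (g k) + (- Im b) * Im (g k))))
      by (intro k; unfold Cplus, Cmult, Re, Im; simpl; ring).
    rewrite Series_plus, !Series_plus, !Series_scal_l.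
    + unfold Re, Im; ring.
    all: repeat apply exs_plus; try apply exs_scal; auto.
  - rewrite (Series_ext _ (fun k => (Im a * Re (f k) + Re a * Im (f k)) + (Im b * Re (g k) + Re b * Im (g k))))
      by (intro k; unfold Cplus, Cmult, Re, Im; simpl; ring).
    rewrite Series_plus, !Series_plus, !Series_scal_l.
    + unfold Re, Im; ring.
    all: repeat apply exs_plus; try apply exs_scal; auto.
Qed.

Lemma im_le_Cmod (c : C) : Rabs (Im c) <= Cmod c.
Proof. unfold Cmod. rewrite <- sqrt_Rsqr_abs. apply sqrt_le_1_alt.
  unfold Rsqr, Im; simpl. pose proof (Rle_0_sqr (fst c)); unfold Rsqr in *; nra. Qed.

Lemma conv_of_bound (f : nat -> C) (K : nat) :
  (forall k, (K <= k)%nat -> Cmod (f k) <= 2 * exp (-1) ^ k) -> conv_nat f.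
Proof.
  intro Hb.
  assert (Hg : ex_series (fun k => 2 * exp (-1) ^ (K + k))).
  { apply exs_scal. apply (ex_series_incr_n (fun k => exp (-1) ^ k) K).
    apply ex_series_geom. rewrite Rabs_pos_eq by (apply Rlt_le, exp_pos).
    rewrite <- exp_0. apply exp_increasing. lra. }
  split; apply (ex_series_incr_n _ K); apply (@ex_series_le R_AbsRing R_CompleteNormedModule _ _) with (2:=Hg); intro n;
   change norm with Rabs; simpl;
   (eapply Rle_trans; [ | apply Hb; lia]).
  - apply re_le_Cmod.
  - apply im_le_Cmod.
Qed.

Lemma den_bound (Y : C) : 1 <= 2*PI*Im Y \/ 2*PI*Im Y <= -1 ->
  1/2 <= Cmod (Cminus (RtoC 1) (ee Y)).
Proof.
  intro H. rewrite <- ?Rmult_assoc in H.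
  assert (T1 : Cmod (RtoC 1) <= Cmod (Cminus (RtoC 1) (ee Y)) + Cmod (ee Y)).
  { rewrite <- Cmod_triangle. right. f_equal. ring. }
  assert (T2 : Cmod (ee Y) <= Cmod (Cminus (RtoC 1) (ee Y)) + Cmod (RtoC 1)).
  { replace (ee Y) with (Cplus (Cmult (RtoC (-1)) (Cminus (RtoC 1) (ee Y))) (RtoC 1)) at 1 by ring.
    eapply Rle_trans; [apply Cmod_triangle|]. rewrite Cmod_mult, Cmod_R. right. unfold Rabs; destruct Rcase_abs; lra. }
  rewrite Cmod_R, Rabs_R1 in T1, T2. rewrite Cmod_ee in T1, T2.
  assert (He : exp 1 > 2) by (pose proof (exp_ineq1 1 ltac:(lra)); lra).
  assert (He' : exp (-(1)) < 1/2).
  { rewrite exp_Ropp. apply (Rmult_lt_reg_l (exp 1)); [lra|]. field_simplify; lra. }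
  destruct H as [H|H].
  - assert (exp (-(2*PI*Im Y)) <= exp (-(1))) by ((destruct (Req_dec (-(2*PI*Im Y)) (-(1))) as [E|E]; [rewrite E; lra| left; apply exp_increasing; lra])).
    lra.
  - assert (exp 1 <= exp (-(2*PI*Im Y))) by (destruct (Req_dec (-(2*PI*Im Y)) 1) as [E|E]; [rewrite E; lra| left; apply exp_increasing; lra]).
    lra.
Qed.

Lemma thresh (A B C0 D E : R) : 0 < A -> 0 < E -> exists N, 1 <= N /\ forall n : R, N <= Rabs n ->
  Rabs n <= 2*PI*(A*n^2 + B*n + C0) /\ (1 <= 2*PI*(D + n*E) \/ 2*PI*(D+n*E) <= -1).
Proof.
  intros HA HE. pose proof PI2_1 as Hpi.
  set (A' := 2*PI*A). set (B' := 2*PI*B). set (C' := 2*PI*C0).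
  assert (HA' : 0 < A') by (unfold A'; nra).
  exists (Rmax 1 (Rmax ((Rabs B' + Rabs C' + 1)/A') ((Rabs D + 1)/E))).
  split; [apply Rmax_l|]. intros n Hn.
  pose proof (Rmax_l 1 (Rmax ((Rabs B' + Rabs C' + 1)/A') ((Rabs D + 1)/E))).
  pose proof (Rmax_r 1 (Rmax ((Rabs B' + Rabs C' + 1)/A') ((Rabs D + 1)/E))).
  pose proof (Rmax_l ((Rabs B' + Rabs C' + 1)/A') ((Rabs D + 1)/E)).
  pose proof (Rmax_r ((Rabs B' + Rabs C' + 1)/A') ((Rabs D + 1)/E)).
  set (a := Rabs n) in *.
  assert (Ha1 : 1 <= a) by lra.
  assert (Hb : (Rabs B' + Rabs C' + 1) <= A' * a).
  { assert (X : (Rabs B'+Rabs C'+1) = A' * ((Rabs B'+Rabs C'+1)/A')) by (field; lra).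
    rewrite X at 1. apply Rmult_le_compat_l; lra. }
  assert (Hd : Rabs D + 1 <= E * a).
  { assert (X : (Rabs D+1) = E * ((Rabs D+1)/E)) by (field; lra).
    rewrite X at 1. apply Rmult_le_compat_l; lra. }
  assert (Hn2 : n^2 = a^2) by (unfold a; rewrite <- (pow2_abs n); reflexivity).
  assert (HBn : - (Rabs B' * a) <= B' * n).
  { unfold a. rewrite <- Rabs_mult. pose proof (Rabs_maj2 (B'*n)). pose proof (Rle_abs (B' * n)). lra. }
  assert (HC : - Rabs C' <= C') by (pose proof (Rabs_maj2 C'); lra).
  assert (HD : - Rabs D <= D /\ D <= Rabs D) by (pose proof (Rabs_maj2 D); pose proof (Rle_abs D); lra).
  pose proof (Rabs_pos B'). pose proof (Rabs_pos C').
  split.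
  - replace (2*PI*(A*n^2+B*n+C0)) with (A'*n^2 + B'*n + C') by (unfold A', B', C'; ring).
    rewrite Hn2. nra.
  - destruct (Rle_dec 0 n) as [Hp|Hp].
    + left. assert (a = n) by (unfold a; apply Rabs_pos_eq; lra). nra.
    + right. assert (a = -n) by (unfold a; apply Rabs_left; lra). nra.
Qed.

Lemma term_bound (A B C0 D E : R) : 0 < A -> 0 < E -> exists N, 1 <= N /\ forall n : R, N <= Rabs n ->
  forall X Y : C, Im X = A*n^2 + B*n + C0 -> Im Y = D + n*E ->
  Cmod (Cdiv (ee X) (Cminus (RtoC 1) (ee Y))) <= 2 * exp (- Rabs n).
Proof.
  intros HA HE. destruct (thresh A B C0 D E HA HE) as [N [HN1 HN]].
  exists N. split; auto. intros n Hn X Y HX HY.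
  destruct (HN n Hn) as [H1 H2].
  assert (Hd : 1/2 <= Cmod (Cminus (RtoC 1) (ee Y))) by (apply den_bound; rewrite HY; exact H2).
  assert (Hnz : Cminus (RtoC 1) (ee Y) <> RtoC 0).
  { intro Z. rewrite Z, Cmod_0 in Hd. lra. }
  rewrite Cmod_div by exact Hnz. rewrite Cmod_ee, HX.
  assert (exp (-(2*PI*(A*n^2+B*n+C0))) <= exp (- Rabs n)).
  { destruct (Req_dec (-(2*PI*(A*n^2+B*n+C0))) (- Rabs n)) as [E'|E']; [rewrite E'; lra|left; apply exp_increasing; lra]. }
  pose proof (exp_pos (-(2*PI*(A*n^2+B*n+C0)))).
  apply (Rmult_le_reg_r (Cmod (Cminus (RtoC 1) (ee Y)))); [lra|].
  unfold Rdiv. rewrite Rmult_assoc, Rinv_l by lra. nra.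
Qed.

Definition convZ (f : Z -> C) := conv_nat (fun k => f (Z.of_nat k)) /\ conv_nat (fun k => f (- Z.of_nat k - 1)%Z).

Lemma exp_neg_INR (k : nat) : exp (- INR k) = exp (-1) ^ k.
Proof. induction k. simpl. rewrite Ropp_0, exp_0. reflexivity.
  rewrite S_INR, <- tech_pow_Rmult, <- IHk, <- exp_plus. f_equal. ring. Qed.

Lemma convZ_of (f : Z -> C) (N : R) :
  (forall n : Z, N <= Rabs (IZR n) -> Cmod (f n) <= 2 * exp (- Rabs (IZR n))) -> convZ f.
Proof.
  intro H. destruct (INR_unbounded N) as [K HK].
  split; apply (conv_of_bound _ K); intros k Hk.
  - assert (Hk' : INR K <= INR k) by (apply le_INR; exact Hk).
    pose proof (pos_INR k).
    rewrite <- exp_neg_INR.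
    replace (- INR k) with (- Rabs (IZR (Z.of_nat k))) by (rewrite <- INR_IZR_INZ, Rabs_pos_eq; lra).
    apply H. rewrite <- INR_IZR_INZ, Rabs_pos_eq; lra.
  - assert (Hk' : INR K <= INR k) by (apply le_INR; exact Hk).
    pose proof (pos_INR k).
    assert (Ha : Rabs (IZR (- Z.of_nat k - 1)) = INR k + 1).
    { rewrite minus_IZR, opp_IZR, <- INR_IZR_INZ. rewrite Rabs_left by lra. ring. }
    rewrite <- exp_neg_INR. eapply Rle_trans; [apply H; rewrite Ha; lra|].
    rewrite Ha. apply Rmult_le_compat_l; [lra|].
    destruct (Req_dec (-(INR k + 1)) (- INR k)); [right; f_equal; auto| left; apply exp_increasing; lra].
Qed.

Definition PT (m s : R) (tau z1 z2 : C) (n : Z) : C :=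
    let nr := RtoC (IZR n) in
    Cdiv (ee (Cplus (Cplus (Cmult (Cmult (RtoC m) nr) (Cplus z1 z2))
                           (Cmult (RtoC s) z1))
                    (Cmult (RtoC (m * IZR n ^ 2 + s * IZR n)) tau)))
         (Cminus (RtoC 1) (ee (Cplus z1 (Cmult nr tau)))).

Lemma Phi_plus_PT m s tau z1 z2 : Phi_plus m s tau z1 z2 = csum_Z (PT m s tau z1 z2).
Proof. reflexivity. Qed.

Lemma PT_conv m s tau z1 z2 : 0 < m -> 0 < Im tau -> convZ (PT m s tau z1 z2).
Proof.
  intros Hm Ht.
  destruct (term_bound (m * Im tau) (m * (Im z1 + Im z2) + s * Im tau) (s * Im z1) (Im z1) (Im tau))
    as [N [HN1 HN]]; [nra|auto|].
  apply (convZ_of _ N). intros n Hn. unfold PT. apply HN; auto.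
  - destruct z1, z2, tau; unfold Cplus, Cmult, RtoC, Im; simpl. ring.
  - destruct z1, z2, tau; unfold Cplus, Cmult, RtoC, Im; simpl. ring.
Qed.

Lemma csum_Z_lin a b f g : convZ f -> convZ g ->
  csum_Z (fun n => Cplus (Cmult a (f n)) (Cmult b (g n))) = Cplus (Cmult a (csum_Z f)) (Cmult b (csum_Z g)).
Proof. intros [H1 H2] [H3 H4]. unfold csum_Z. rewrite (csum_nat_lin a b _ _ H1 H3), (csum_nat_lin a b _ _ H2 H4). ring. Qed.

Lemma csum_Z_ext f g : (forall n, f n = g n) -> csum_Z f = csum_Z g.
Proof. intro H. f_equal. apply functional_extensionality. exact H. Qed.

Lemma csum_nat_scal_real c f : Im c = 0 -> csum_nat (fun k => Cmult c (f k)) = Cmult c (csum_nat f).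
Proof. intro H. destruct c as [c0 c1]. simpl in H. subst c1. unfold csum_nat.
  apply injective_projections; simpl.
  - rewrite (Series_ext _ (fun k => c0 * Re (f k))) by (intro; unfold Cmult, Re, Im; simpl; ring).
    rewrite Series_scal_l. unfold Re, Im. ring.
  - rewrite (Series_ext _ (fun k => c0 * Im (f k))) by (intro; unfold Cmult, Re, Im; simpl; ring).
    rewrite Series_scal_l. unfold Re, Im. ring.
Qed.

Lemma csum_Z_scal_real c f : Im c = 0 -> csum_Z (fun n => Cmult c (f n)) = Cmult c (csum_Z f).
Proof. intro H. unfold csum_Z. rewrite !csum_nat_scal_real by exact H. ring. Qed.

Lemma Phi_double (M2 : nat) (s2 : Z) (tau w1 w2 : C) : (0 < M2)%nat -> 0 < Im tau ->
  (forall n : Z, ee (Cplus w1 (Cmult (RtoC (2 * IZR n)) tau)) <> RtoC 1) ->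
  Cmult (RtoC 2) (Phi_plus (half_nat M2) (half_Z s2) (Cmult (RtoC 2) tau) w1 w2) =
  Cplus (Phi_plus (half_nat (2*M2)) (half_Z (2*s2)) tau (Cdiv w1 (RtoC 2)) (Cdiv w2 (RtoC 2)))
        (Cmult (ee (RtoC (- half_Z s2)))
          (Phi_plus (half_nat (2*M2)) (half_Z (2*s2)) tau (Cdiv (Cplus w1 (RtoC 1)) (RtoC 2)) (Cdiv (Cminus w2 (RtoC 1)) (RtoC 2)))).
Proof.
  intros HM Ht Hw.
  assert (Hm : 0 < half_nat (2*M2)).
  { unfold half_nat. apply lt_0_INR in HM. rewrite mult_INR. simpl. lra. }
  rewrite !Phi_plus_PT.
  rewrite (csum_Z_ext _ (fun n => Cmult (RtoC (1/2)) (Cplus (Cmult (RtoC 1) (PT (half_nat (2 * M2)) (half_Z (2 * s2)) tau (Cdiv w1 (RtoC 2)) (Cdiv w2 (RtoC 2)) n))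
       (Cmult (ee (RtoC (- half_Z s2))) (PT (half_nat (2 * M2)) (half_Z (2 * s2)) tau (Cdiv (Cplus w1 (RtoC 1)) (RtoC 2))
          (Cdiv (Cminus w2 (RtoC 1)) (RtoC 2)) n))))).
  2:{ intro n. unfold PT.
      set (X := Cplus (Cplus (Cmult (Cmult (RtoC (half_nat (2 * M2))) (RtoC (IZR n))) (Cplus (Cdiv w1 (RtoC 2)) (Cdiv w2 (RtoC 2))))
                           (Cmult (RtoC (half_Z (2 * s2))) (Cdiv w1 (RtoC 2))))
                    (Cmult (RtoC (half_nat (2 * M2) * IZR n ^ 2 + half_Z (2 * s2) * IZR n)) tau)).
      set (Y := Cplus (Cdiv w1 (RtoC 2)) (Cmult (RtoC (IZR n)) tau)).
      assert (E1 : ee (Cplus (Cplus (Cmult (Cmult (RtoC (half_nat M2)) (RtoC (IZR n))) (Cplus w1 w2))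
                           (Cmult (RtoC (half_Z s2)) w1))
                    (Cmult (RtoC (half_nat M2 * IZR n ^ 2 + half_Z s2 * IZR n)) (Cmult (RtoC 2) tau))) = ee X).
      { f_equal. unfold X, half_nat, half_Z. rewrite mult_INR, mult_IZR. destruct w1, w2, tau. ceq. }
      assert (E2 : ee (Cplus (Cplus (Cmult (Cmult (RtoC (half_nat (2 * M2))) (RtoC (IZR n)))
                 (Cplus (Cdiv (Cplus w1 (RtoC 1)) (RtoC 2)) (Cdiv (Cminus w2 (RtoC 1)) (RtoC 2))))
              (Cmult (RtoC (half_Z (2 * s2))) (Cdiv (Cplus w1 (RtoC 1)) (RtoC 2))))
           (Cmult (RtoC (half_nat (2 * M2) * IZR n ^ 2 + half_Z (2 * s2) * IZR n)) tau))
           = Cmult (ee X) (ee (RtoC (half_Z s2)))).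
      { rewrite <- ee_add. f_equal. unfold X, half_nat, half_Z. rewrite mult_INR, mult_IZR. destruct w1, w2, tau. ceq. }
      assert (E3 : ee (Cplus w1 (Cmult (RtoC (IZR n)) (Cmult (RtoC 2) tau))) = Cmult (ee Y) (ee Y)).
      { rewrite <- ee_add. f_equal. unfold Y. destruct w1, tau. ceq. }
      assert (E4 : ee (Cplus (Cdiv (Cplus w1 (RtoC 1)) (RtoC 2)) (Cmult (RtoC (IZR n)) tau)) = Copp (ee Y)).
      { replace (Cplus (Cdiv (Cplus w1 (RtoC 1)) (RtoC 2)) (Cmult (RtoC (IZR n)) tau)) with (Cplus Y (RtoC (1/2)))
          by (unfold Y; destruct w1, tau; ceq).
        rewrite ee_add, ee_half. ring. }
      assert (E5 : Cmult (ee (RtoC (- half_Z s2))) (ee (RtoC (half_Z s2))) = RtoC 1).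
      { rewrite <- ee_add, <- ee_0. f_equal. ceq. }
      assert (Hn : Cminus (RtoC 1) (Cmult (ee Y) (ee Y)) <> RtoC 0).
      { rewrite <- E3. intro Z. apply (Hw n). rewrite <- (Cplus_0_l (ee _)), <- Z.
        replace (Cmult (RtoC (2 * IZR n)) tau) with (Cmult (RtoC (IZR n)) (Cmult (RtoC 2) tau)) by (destruct tau; ceq).
        ring. }
      rewrite E1, E2, E3, E4. fold Y.
      assert (Hn1 : Cminus (RtoC 1) (ee Y) <> RtoC 0).
      { intro Z. apply Hn. replace (Cminus (RtoC 1) (Cmult (ee Y) (ee Y))) with (Cmult (Cminus (RtoC 1) (ee Y)) (Cplus (RtoC 1) (ee Y))) by ring.
        rewrite Z. ring. }
      assert (Hn2 : Cminus (RtoC 1) (Copp (ee Y)) <> RtoC 0).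
      { intro Z. apply Hn. replace (Cminus (RtoC 1) (Cmult (ee Y) (ee Y))) with (Cmult (Cminus (RtoC 1) (ee Y)) (Cminus (RtoC 1) (Copp (ee Y)))) by ring.
        rewrite Z. ring. }
      set (c := ee (RtoC (- half_Z s2))) in *. set (e := ee (RtoC (half_Z s2))) in *.
      assert (F : Cmult c (Cdiv (Cmult (ee X) e) (Cminus (RtoC 1) (Copp (ee Y)))) = Cmult (Cmult c e) (Cdiv (ee X) (Cminus (RtoC 1) (Copp (ee Y))))).
      { field. auto. }
      rewrite F, E5. replace (RtoC (1/2)) with (Cinv (RtoC 2)) by ceq.
      assert (H2 : RtoC 2 <> RtoC 0) by (intro Z; apply RtoC_inj in Z; lra).
      field. repeat split; auto. }
  rewrite csum_Z_scal_real by (simpl; ring).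
  rewrite csum_Z_lin by (apply PT_conv; auto).
  rewrite Cmult_assoc. replace (Cmult (RtoC 2) (RtoC (1/2))) with (RtoC 1) by ceq. ring.
Qed.

Lemma Theta_double (a b j m : R) (tau u v : C) : m <> 0 -> a = 2*j -> b = 2*m -> u = Cdiv v (RtoC 2) ->
  Theta_plus a b tau u = Theta_plus j m (Cmult (RtoC 2) tau) v.
Proof.
  intros Hm -> -> ->. unfold Theta_plus. apply csum_Z_ext. intro n.
  replace (IZR n + 2 * j / (2 * (2 * m))) with (IZR n + j / (2 * m)) by (field; auto).
  f_equal. set (A := IZR n + j / (2*m)). destruct v, tau. ceq.
Qed.

Lemma sgn_pos x : 0 < x -> sgn x = 1.
Proof. intro. unfold sgn. destruct (Rlt_dec 0 x); lra. Qed.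
Lemma sgn_neg x : x < 0 -> sgn x = -1.
Proof. intro. unfold sgn. destruct (Rlt_dec 0 x); [lra|]. destruct (Rlt_dec x 0); lra. Qed.

Lemma R_double (a b j m : R) (tau u v : C) : 1 <= 2*m -> 0 < Im tau -> a = 2*j -> b = 2*m -> u = Cdiv v (RtoC 2) ->
  R_plus a b tau u = R_plus j m (Cmult (RtoC 2) tau) v.
Proof.
  intros Hm Ht -> -> ->. unfold R_plus. apply csum_Z_ext. intro k.
  replace (2 * j + 2 * (2 * m) * IZR k) with (2 * (j + 2*m*IZR k)) by ring.
  set (N := j + 2*m*IZR k).
  f_equal.
  - f_equal. f_equal.
    + unfold N. destruct (Z_le_gt_dec 0 k) as [Hk|Hk].
      * apply IZR_le in Hk. rewrite !sgn_pos; nra.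
      * assert (Hk' : (k <= -1)%Z) by lia. apply IZR_le in Hk'. rewrite !sgn_neg; nra.
    + f_equal. unfold psi.
      assert (Hi : Im (Cmult (RtoC 2) tau) = 2 * Im tau) by (destruct tau; unfold Im, Cmult, RtoC; simpl; ring).
      assert (Hv : Im (Cdiv v (RtoC 2)) = Im v / 2) by (destruct v; unfold Im, Cdiv, Cmult, Cinv, RtoC; simpl; field).
      rewrite Hi, Hv.
      replace (2 * Im tau / m) with (2*2 * (Im tau / (2 * m))) by (field; lra).
      rewrite sqrt_mult by (try lra; apply Rlt_le; apply Rdiv_lt_0_compat; lra).
      replace (2*2) with (Rsqr 2) by (unfold Rsqr; ring). rewrite sqrt_Rsqr by lra.
      field. lra.
  - f_equal. destruct v, tau. ceq. all: lra.
Qed.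

Lemma R_shift (J : Z) (B : nat) (tau u : C) : (0 < B)%nat ->
  R_plus (IZR J) (INR B) tau (Cplus u (RtoC (1/2))) = Cmult (ee (RtoC (IZR J / 2))) (R_plus (IZR J) (INR B) tau u).
Proof.
  intro HB. apply lt_0_INR in HB.
  unfold R_plus. rewrite <- csum_Z_scal_real by apply ee_halfint_im.
  apply csum_Z_ext. intro k.
  assert (HI : Im (Cplus u (RtoC (1/2))) = Im u) by (destruct u; unfold Im, Cplus, RtoC; simpl; ring).
  unfold psi at 1. rewrite HI. fold (psi (INR B) (IZR J + 2 * INR B * IZR k) tau u).
  set (n := IZR J + 2 * INR B * IZR k).
  set (s := RtoC (sgn _ - _)).
  replace (Cplus (Cmult (RtoC (- n ^ 2 / (4 * INR B))) tau) (Cmult (RtoC n) (Cplus u (RtoC (1 / 2)))))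
    with (Cplus (Cplus (Cmult (RtoC (- n ^ 2 / (4 * INR B))) tau) (Cmult (RtoC n) u)) (Cplus (RtoC (IZR J / 2)) (RtoC (IZR (Z.of_nat B * k)))))
    by (rewrite mult_IZR, <- INR_IZR_INZ; unfold n; destruct u, tau; ceq; lra).
  rewrite ee_add, (ee_add (RtoC _) (RtoC _)), ee_int. ring.
Qed.

Lemma csum_fin_ext N f g : (forall i, (i < N)%nat -> f i = g i) -> csum_fin N f = csum_fin N g.
Proof. induction N; intro H; simpl; auto. rewrite IHN by (intros; apply H; lia). rewrite H by lia. reflexivity. Qed.

Lemma csum_fin_plus N f g : csum_fin N (fun i => Cplus (f i) (g i)) = Cplus (csum_fin N f) (csum_fin N g).
Proof. induction N; simpl. ceq. rewrite IHN. ring. Qed.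

Lemma csum_fin_scal N c f : csum_fin N (fun i => Cmult c (f i)) = Cmult c (csum_fin N f).
Proof. induction N; simpl. ceq. rewrite IHN. ring. Qed.

Lemma csum_fin_alt N T : csum_fin (2*N) (fun i => Cplus (T i) (Cmult (ee (RtoC (INR i / 2))) (T i))) =
  Cmult (RtoC 2) (csum_fin N (fun i => T (2*i)%nat)).
Proof.
  induction N. simpl. ceq.
  replace (2 * S N)%nat with (S (S (2*N))) by lia. cbn [csum_fin]. rewrite IHN.
  replace (ee (RtoC (INR (2*N) / 2))) with (RtoC 1)
    by (rewrite <- (ee_int (Z.of_nat N)); f_equal; f_equal; rewrite <- INR_IZR_INZ, mult_INR; simpl; field).
  replace (ee (RtoC (INR (S (2*N)) / 2))) with (RtoC (-1))
    by (rewrite <- ee_half, <- (Cmult_1_l (ee (RtoC (1/2)))), <- (ee_int (Z.of_nat N)), <- ee_add; f_equal;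
        rewrite <- INR_IZR_INZ, S_INR, mult_INR; simpl; ceq).
  replace (S (2*N)) with (2*N+1)%nat by lia. ring.
Qed.

Definition TT (M2 : nat) (s2 : Z) (tau u v : C) (i : nat) : C :=
  Cmult (R_plus (half_Z s2 + INR i) (half_nat M2) tau u) (Theta_plus (half_Z s2 + INR i) (half_nat M2) tau v).

Lemma Phi_tilde_TT M2 s2 tau z1 z2 : Phi_tilde M2 s2 tau z1 z2 =
  Cminus (Phi_plus (half_nat M2) (half_Z s2) tau z1 z2)
    (Cmult (RtoC (1/2)) (csum_fin M2 (TT M2 s2 tau (Cdiv (Cminus z1 z2) (RtoC 2)) (Cplus z1 z2)))).
Proof. reflexivity. Qed.

Lemma Phi_tilde_double (M2 : nat) (s2 : Z) (tau w1 w2 : C) : (0 < M2)%nat -> 0 < Im tau ->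
  (forall n : Z, ee (Cplus w1 (Cmult (RtoC (2 * IZR n)) tau)) <> RtoC 1) ->
  Cmult (RtoC 2) (Phi_tilde M2 s2 (Cmult (RtoC 2) tau) w1 w2) =
  Cplus (Phi_tilde (2*M2) (2*s2) tau (Cdiv w1 (RtoC 2)) (Cdiv w2 (RtoC 2)))
        (Cmult (ee (RtoC (- half_Z s2)))
          (Phi_tilde (2*M2) (2*s2) tau (Cdiv (Cplus w1 (RtoC 1)) (RtoC 2)) (Cdiv (Cminus w2 (RtoC 1)) (RtoC 2)))).
Proof.
  intros HM Ht Hw.
  pose proof (Phi_double M2 s2 tau w1 w2 HM Ht Hw) as HP.
  rewrite !Phi_tilde_TT.
  set (u := Cdiv (Cminus (Cdiv w1 (RtoC 2)) (Cdiv w2 (RtoC 2))) (RtoC 2)).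
  set (v := Cplus (Cdiv w1 (RtoC 2)) (Cdiv w2 (RtoC 2))).
  assert (A1 : Cdiv (Cminus (Cdiv (Cplus w1 (RtoC 1)) (RtoC 2)) (Cdiv (Cminus w2 (RtoC 1)) (RtoC 2))) (RtoC 2) = Cplus u (RtoC (1/2)))
    by (unfold u; destruct w1, w2; ceq).
  assert (A2 : Cplus (Cdiv (Cplus w1 (RtoC 1)) (RtoC 2)) (Cdiv (Cminus w2 (RtoC 1)) (RtoC 2)) = v)
    by (unfold v; destruct w1, w2; ceq).
  rewrite A1, A2.
  assert (HMr : 1 <= INR M2) by (apply (le_INR 1); lia).
  set (c := ee (RtoC (- half_Z s2))) in *.
  assert (S2eq : csum_fin (2*M2) (TT (2*M2) (2*s2) tau (Cplus u (RtoC (1/2))) v) =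
     csum_fin (2*M2) (fun i => Cmult (ee (RtoC (IZR (s2 + Z.of_nat i) / 2))) (TT (2*M2) (2*s2) tau u v i))).
  { apply csum_fin_ext; intros i _. unfold TT.
    replace (half_Z (2*s2) + INR i) with (IZR (s2 + Z.of_nat i))
      by (unfold half_Z; rewrite plus_IZR, mult_IZR, <- INR_IZR_INZ; field).
    replace (half_nat (2*M2)) with (INR M2) by (unfold half_nat; rewrite mult_INR; simpl; field).
    rewrite R_shift by auto. ring. }
  assert (Ssum : Cplus (csum_fin (2*M2) (TT (2*M2) (2*s2) tau u v))
                   (Cmult c (csum_fin (2*M2) (TT (2*M2) (2*s2) tau (Cplus u (RtoC (1/2))) v))) =
                 Cmult (RtoC 2) (csum_fin M2 (TT M2 s2 (Cmult (RtoC 2) tau) (Cdiv (Cminus w1 w2) (RtoC 2)) (Cplus w1 w2)))).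
  { rewrite S2eq, <- csum_fin_scal, <- csum_fin_plus.
    rewrite (csum_fin_ext _ _ (fun i => Cplus (TT (2*M2) (2*s2) tau u v i)
                 (Cmult (ee (RtoC (INR i / 2))) (TT (2*M2) (2*s2) tau u v i)))).
    2:{ intros i _. f_equal. rewrite Cmult_assoc. unfold c. rewrite <- ee_add. f_equal. f_equal.
        unfold half_Z; rewrite plus_IZR, <- INR_IZR_INZ; ceq. }
    rewrite csum_fin_alt. f_equal. apply csum_fin_ext. intros i _. unfold TT. f_equal.
    - apply R_double; auto.
      + unfold half_nat. lra.
      + unfold half_Z. rewrite mult_IZR, mult_INR. simpl. field.
      + unfold half_nat. rewrite mult_INR. simpl. field.
      + unfold u. destruct w1, w2. ceq.
    - apply Theta_double.
      + unfold half_nat. lra.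
      + unfold half_Z. rewrite mult_IZR, mult_INR. simpl. field.
      + unfold half_nat. rewrite mult_INR. simpl. field.
      + unfold v. destruct w1, w2. ceq. }
  match goal with |- Cmult (RtoC 2) (Cminus ?P (Cmult ?h ?S)) = _ =>
    replace (Cmult (RtoC 2) (Cminus P (Cmult h S))) with (Cminus (Cmult (RtoC 2) P) (Cmult h (Cmult (RtoC 2) S))) by ring end.
  rewrite HP, <- Ssum. ring.
Qed.

Theorem lemma6p19 (M2 : nat) (s2 : Z) (tau z1 z2 t : C)
  (hM : (0 < M2)%nat) (htau : 0 < Im tau)
  (hz1 : forall n : Z, ee (Cplus z1 (Cmult (RtoC (2 * IZR n)) tau)) <> RtoC 1)
  (hz2 : forall n : Z, ee (Cplus (Copp z2) (Cmult (RtoC (2 * IZR n)) tau)) <> RtoC 1) :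
  Cmult (RtoC 2) (Psi_tilde M2 s2 (Cmult (RtoC 2) tau) z1 z2 t) =
  Cplus
    (Psi_tilde (2 * M2) (2 * s2) tau
       (Cdiv z1 (RtoC 2)) (Cdiv z2 (RtoC 2)) (Cdiv t (RtoC 2)))
    (Cmult (ee (RtoC (- half_Z s2)))
       (Psi_tilde (2 * M2) (2 * s2) tau
          (Cdiv (Cplus z1 (RtoC 1)) (RtoC 2))
          (Cdiv (Cminus z2 (RtoC 1)) (RtoC 2)) (Cdiv t (RtoC 2)))).
Proof.
  pose proof (Phi_tilde_double M2 s2 tau z1 z2 hM htau hz1) as HA.
  pose proof (Phi_tilde_double M2 s2 tau (Copp z2) (Copp z1) hM htau hz2) as HB.
  unfold Psi_tilde.
  replace (ee (Copp (Cmult (RtoC (half_nat (2 * M2))) (Cdiv t (RtoC 2)))))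
    with (ee (Copp (Cmult (RtoC (half_nat M2)) t)))
    by (f_equal; unfold half_nat; rewrite mult_INR; destruct t; ceq).
  replace (Copp (Cdiv z2 (RtoC 2))) with (Cdiv (Copp z2) (RtoC 2)) by (destruct z2; ceq).
  replace (Copp (Cdiv z1 (RtoC 2))) with (Cdiv (Copp z1) (RtoC 2)) by (destruct z1; ceq).
  replace (Copp (Cdiv (Cminus z2 (RtoC 1)) (RtoC 2))) with (Cdiv (Cplus (Copp z2) (RtoC 1)) (RtoC 2)) by (destruct z2; ceq).
  replace (Copp (Cdiv (Cplus z1 (RtoC 1)) (RtoC 2))) with (Cdiv (Cminus (Copp z1) (RtoC 1)) (RtoC 2)) by (destruct z1; ceq).
  set (E := ee (Copp (Cmult (RtoC (half_nat M2)) t))).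
  set (c := ee (RtoC (- half_Z s2))) in *.
  match goal with |- Cmult (RtoC 2) (Cmult E (Cminus ?A ?B)) = _ =>
    replace (Cmult (RtoC 2) (Cmult E (Cminus A B))) with (Cmult E (Cminus (Cmult (RtoC 2) A) (Cmult (RtoC 2) B))) by ring end.
  rewrite HA, HB. ring.
Qed.
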